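(* Let $k$ be a ring, let $B\subseteq A$ be $k$-modules and let $\mathcal A=\{A_i\}_{i\in I}$ be a decomposition of $A$ with $I$ finite. Then there exist a set $U$ and a map $u:I\to U$ such that $u_*\mathcal A$ restricts to $B$, and such that every map $f:I\to J$ (to any set $J$) for which $f_*\mathcal A$ restricts to $B$ factors uniquely as $f=g\circ u$ with $g:U\to J$.
   Context: A decomposition of a $k$-module $M$ is a family of submodules $\{M_i\}_{i\in I}$ such that the natural map $\bigoplus_{i}M_i\to M$ is an isomorphism. For $f:I\to J$, $f_*\{M_i\}_{i\in I}=\{\sum_{i\in f^{-1}(j)}M_i\}_{j\in J}$. A decomposition $\{A_i\}_{i\in I}$ of $A$ restricts to a submodule $B$ if $\{A_i\cap B\}_{i\in I}$ is a decomposition of $B$. *)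

(* Defs.v *)
From HB Require Import structures.
From Stdlib Require List.
From mathcomp Require Import all_boot all_order all_algebra.
Set Implicit Arguments. Unset Strict Implicit. Unset Printing Implicit Defensive.
Import GRing.Theory.
Local Open Scope ring_scope.

Section Decomp.
Variables (k : pzRingType) (M : lmodType k).

Definition is_submod (N : M -> Prop) : Prop :=
  [/\ N 0, (forall x y, N x -> N y -> N (x + y)) & (forall (a : k) x, N x -> N (a *: x))].

(* {N_j}_{j : J} is a decomposition of the submodule P: each N_j is a submodule
   of P, and the natural map (direct sum of the N_j) -> P is an isomorphism.
   Elements of the direct sum are finitely supported families; a support is
   given by a duplicate-free list s of indices. *)
Definition is_decomposition (J : Type) (P : M -> Prop) (N : J -> M -> Prop) : Prop :=
  [/\ is_submod P,
      (forall j, is_submod (N j)),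
      (forall j m, N j m -> P m),
      (forall m, P m -> exists (s : seq J) (x : J -> M),
          [/\ List.NoDup s, (forall j, N j (x j)) & m = \sum_(j <- s) x j])
    &
      (forall (s : seq J) (x : J -> M), List.NoDup s -> (forall j, N j (x j)) ->
          \sum_(j <- s) x j = 0 -> forall j, List.In j s -> x j = 0)].

Definition pushforward (I : finType) (J : Type) (f : I -> J) (N : I -> M -> Prop)
  : J -> M -> Prop :=
  fun j m => exists x : I -> M,
    [/\ (forall i, N i (x i)), (forall i, f i <> j -> x i = 0) & m = \sum_(i : I) x i].

Definition restricts (J : Type) (N : J -> M -> Prop) (B : M -> Prop) : Prop :=
  is_decomposition B (fun j m => N j m /\ B m).

End Decomp.

(* Main.v *)
Require Import Defs.
From HB Require Import structures.
From mathcomp Require Import all_boot all_order all_algebra.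
From Stdlib Require Import ClassicalEpsilon.
From Stdlib Require List.
Set Implicit Arguments. Unset Strict Implicit. Unset Printing Implicit Defensive.
Import GRing.Theory.

Definition dec (P : Prop) : bool := if excluded_middle_informative P then true else false.
Lemma decP (P : Prop) : reflect P (dec P).
Proof. rewrite /dec; case: excluded_middle_informative => h; by constructor. Qed.

Lemma In_mem (T : eqType) (x : T) (s : seq T) : List.In x s -> x \in s.
Proof. elim: s => //= a s IH [->|/IH h]; rewrite inE ?eqxx ?h ?orbT //. Qed.
Lemma mem_In (T : eqType) (x : T) (s : seq T) : x \in s -> List.In x s.
Proof. elim: s => //= a s IH; rewrite inE => /orP [/eqP->|/IH]; auto. Qed.
Lemma uniq_NoDup (T : eqType) (s : seq T) : uniq s -> List.NoDup s.
Proof.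
elim: s => [|a s IH] /=; first by constructor.
case/andP=> ha hs; constructor; last exact: IH.
by move/In_mem; rewrite (negbTE ha).
Qed.

Lemma NoDup_uniq (T : eqType) (s : seq T) : List.NoDup s -> uniq s.
Proof.
elim=> [|a l ha _ IH] //=; rewrite IH andbT; apply/negP => /mem_In; exact: ha.
Qed.

Lemma dec_sym (T : Type) (a b : T) : dec (a = b) = dec (b = a).
Proof. by case: decP => h; case: decP => h' //; exfalso; auto. Qed.

Local Open Scope ring_scope.

Lemma sum_notin (M : zmodType) (J : Type) (s : seq J) (j0 : J) (c : J -> M) :
  ~ List.In j0 s -> \sum_(j <- s) (if dec (j = j0) then c j else 0) = 0.
Proof.
elim: s => [|a s IH] /= h; first by rewrite big_nil.
rewrite big_cons IH; last by auto.
by case: decP => [e|_]; [exfalso; auto | rewrite addr0].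
Qed.

Lemma sum_single (M : zmodType) (J : Type) (s : seq J) (j0 : J) (c : J -> M) :
  List.NoDup s -> List.In j0 s -> \sum_(j <- s) (if dec (j = j0) then c j else 0) = c j0.
Proof.
elim=> [|a l ha _ IH] //= [e|h]; rewrite big_cons.
  by subst a; rewrite sum_notin // addr0; case: decP.
rewrite IH //; case: decP => [e|_]; last by rewrite add0r.
by subst a.
Qed.


Section Main.
Variables (k : pzRingType) (M : lmodType k) (B : M -> Prop) (I : finType) (A : I -> M -> Prop).

Lemma submod_opp (N : M -> Prop) x : is_submod N -> N x -> N (- x).
Proof. by case=> _ _ hZ hx; rewrite -scaleN1r; apply: hZ. Qed.
Lemma submod_sub (N : M -> Prop) x y : is_submod N -> N x -> N y -> N (x - y).
Proof. move=> hN hx hy; case: (hN) => _ hD _; apply: hD => //; exact: submod_opp. Qed.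
Lemma submod_sum (N : M -> Prop) (J : Type) (s : seq J) (P : pred J) (F : J -> M) :
  is_submod N -> (forall j, P j -> N (F j)) -> N (\sum_(j <- s | P j) F j).
Proof. case=> h0 hD _ hF; exact: (big_ind N h0 hD). Qed.

Hypothesis hB : is_submod B.
Hypothesis hA : is_decomposition (fun _ : M => True) A.

Lemma A_sub i : is_submod (A i).
Proof. by case: hA. Qed.

Lemma L1 m : exists x : I -> M, (forall i, A i (x i)) /\ m = \sum_i x i.
Proof.
case: hA => _ hsub _ hsurj _.
have [s [x [nd hx ->]]] := hsurj m Logic.I.
exists (fun i => if i \in s then x i else 0); split.
  by move=> i; case: ifP => _ //; case: (hsub i).
by rewrite -big_mkcond /= big_uniq //; exact: NoDup_uniq.
Qed.

Lemma L2 (x y : I -> M) : (forall i, A i (x i)) -> (forall i, A i (y i)) ->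
  \sum_i x i = \sum_i y i -> forall i, x i = y i.
Proof.
case: hA => _ hsub _ _ hinj hx hy e i.
apply/eqP; rewrite -subr_eq0; apply/eqP.
apply: (hinj (enum I) (fun i => x i - y i)).
- exact/uniq_NoDup/enum_uniq.
- by move=> j; apply: submod_sub.
- by rewrite big_enum /= sumrB e subrr.
- by apply: mem_In; rewrite mem_enum.
Qed.

Lemma L2_0 (x : I -> M) : (forall i, A i (x i)) -> \sum_i x i = 0 -> forall i, x i = 0.
Proof.
move=> hx e i; apply: (L2 (y := fun _ => 0)) => //.
  by move=> j; case: (A_sub j).
by rewrite e big1.
Qed.


Lemma pf_submod (J : Type) (f : I -> J) j : is_submod (pushforward f A j).
Proof.
split.
- exists (fun _ => 0); split => //; last by rewrite big1.
  by move=> i; case: (A_sub i).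
- move=> a b [x [hx hx0 ->]] [y [hy hy0 ->]]; exists (fun i => x i + y i); split.
  + by move=> i; case: (A_sub i) => _ hD _; apply: hD.
  + by move=> i h; rewrite hx0 // hy0 // addr0.
  + by rewrite big_split.
- move=> c a [x [hx hx0 ->]]; exists (fun i => c *: x i); split.
  + by move=> i; case: (A_sub i) => _ _ hZ; apply: hZ.
  + by move=> i h; rewrite hx0 // scaler0.
  + by rewrite scaler_sumr.
Qed.

Definition good (S : {set I}) := forall x : I -> M, (forall i, A i (x i)) ->
  B (\sum_i x i) -> B (\sum_(i in S) x i).
Definition fib (J : Type) (f : I -> J) (j : J) : {set I} := [set i | dec (f i = j)].

Lemma Key (J : Type) (f : I -> J) (s : seq J) (y : J -> M) :
  (forall j, pushforward f A j (y j)) -> forall x, (forall i, A i (x i)) ->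
  \sum_i x i = \sum_(j <- s) y j -> forall j0,
  \sum_(i in fib f j0) x i = \sum_(j <- s) (if dec (j = j0) then y j else 0).
Proof.
move=> hy; elim: s => [|a s IH] x hx e j0.
  rewrite big_nil in e; rewrite big_nil big1 // => i _; exact: L2_0 e i.
have [z [hz hz0 ey]] := hy a.
have hx' : forall i, A i (x i - z i) by move=> i; apply: submod_sub; [exact: A_sub| |].
have e' : \sum_i (x i - z i) = \sum_(j <- s) y j.
  by rewrite sumrB e big_cons -ey addrC addKr.
rewrite (eq_bigr (fun i => (x i - z i) + z i)) => [|i _]; last by rewrite subrK.
rewrite big_split /= (IH _ hx' e') big_cons addrC; congr (_ + _).
case: decP => [eq|ne].
  subst a; rewrite ey big_mkcond /=; apply: eq_bigr => i _.
  rewrite inE; case: decP => // h; by rewrite hz0.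
rewrite big1 // => i; rewrite inE => /decP fi; apply: hz0; congruence.
Qed.

Lemma R1 (J : Type) (f : I -> J) : restricts (pushforward f A) B -> forall j, good (fib f j).
Proof.
case=> _ _ _ hsurj _ j0 x hx hBx.
have [s [y [nd hy e]]] := hsurj _ hBx.
rewrite (Key (fun j => proj1 (hy j)) hx e).
apply: submod_sum => // j _; case: ifP => _; first exact: (proj2 (hy j)).
by case: hB.
Qed.

Lemma R2 (J : Type) (f : I -> J) : (forall j, good (fib f j)) -> restricts (pushforward f A) B.
Proof.
move=> hg; split => //.
- move=> j; have [a b c] := pf_submod f j; case: hB => a' b' c'.
  split; [by split| move=> ? ? [? ?] [? ?]; split; auto | move=> ? ? [? ?]; split; auto].
- by move=> j m [].
- move=> m hm; have [x [hx em]] := L1 m.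
  pose decJ := fun a b : J => excluded_middle_informative (a = b).
  exists (List.nodup decJ (map f (enum I))), (fun j => \sum_(i in fib f j) x i).
  split; first exact: List.NoDup_nodup.
  + move=> j; split; last by apply: hg => //; rewrite -em.
    exists (fun i => if i \in fib f j then x i else 0); split.
    * by move=> i; case: ifP => _ //; case: (A_sub i).
    * by move=> i h; rewrite inE; case: decP.
    * by rewrite -big_mkcond.
  + rewrite em (eq_bigr (fun j => \sum_i (if dec (f i = j) then x i else 0))); last first.
      by move=> j _; rewrite big_mkcond /=; apply: eq_bigr => i _; rewrite inE.
    rewrite exchange_big /=; apply: eq_bigr => i _.
    rewrite (eq_bigr (fun j => if dec (j = f i) then x i else 0)); last by move=> j _; rewrite dec_sym.
    rewrite (sum_single (fun _ : J => x i)) //; first exact: List.NoDup_nodup.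
    apply/List.nodup_In/List.in_map/mem_In; by rewrite mem_enum.
- move=> s y nd hy e j0 hin.
  have h0 : forall i, A i 0 by move=> i; case: (A_sub i).
  have := Key (fun j => proj1 (hy j)) (x := fun _ => 0) h0.
  move=> /(_ s); rewrite big1 // => /(_ (esym e) j0).
  by rewrite big1 // sum_single // => <-.
Qed.

Lemma good_setT : good setT.
Proof. by move=> x _ h; rewrite (eq_bigl predT) // => i; rewrite inE. Qed.

Lemma good_setI S T : good S -> good T -> good (S :&: T).
Proof.
move=> gS gT x hx hBx.
pose y i := if i \in T then x i else 0.
have hy : forall i, A i (y i) by move=> i; rewrite /y; case: ifP => _ //; case: (A_sub i).
have := gS y hy; rewrite /y -big_mkcond /=.
have -> : \sum_(i in S) (if i \in T then x i else 0) = \sum_(i in S :&: T) x i.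
  rewrite big_mkcond [RHS]big_mkcond /=; apply: eq_bigr => i _; rewrite inE.
  by case: (i \in S); case: (i \in T).
apply; exact: gT.
Qed.

Lemma good_setC S : good S -> good (~: S).
Proof.
move=> gS x hx hBx.
have e : \sum_i x i = \sum_(i in S) x i + \sum_(i in ~: S) x i.
  rewrite (bigID (mem S)) /=; congr (_ + _); apply: eq_bigl => i; by rewrite in_setC.
have -> : \sum_(i in ~: S) x i = \sum_i x i - \sum_(i in S) x i by rewrite e addrC addKr.
apply: submod_sub => //; exact: gS.
Qed.

Definition u0 i := \bigcap_(S | dec (good S) && (i \in S)) S.

Lemma good_u0 i : good (u0 i).
Proof.
rewrite /u0; apply: (big_ind good); [exact: good_setT | exact: good_setI |].
by move=> S /andP [/decP].
Qed.

Lemma in_u0 i : i \in u0 i.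
Proof. by apply/bigcapP => S /andP []. Qed.

Lemma min_u0 S i : good S -> i \in S -> u0 i \subset S.
Proof. move=> gS iS; apply: bigcap_inf; rewrite iS andbT; exact/decP. Qed.

Lemma u0_eq i j : (u0 j == u0 i) = (j \in u0 i).
Proof.
apply/eqP/idP => [<-|h]; first exact: in_u0.
apply/eqP; rewrite eqEsubset (min_u0 (good_u0 i) h) /=.
case: (boolP (i \in u0 j)) => hi; first by apply: min_u0 => //; exact: good_u0.
have : u0 i \subset u0 i :&: ~: u0 j.
  by apply: min_u0; [apply: good_setI; [exact: good_u0 | exact/good_setC/good_u0] | rewrite !inE in_u0].
move/subsetP/(_ j h); by rewrite !inE h in_u0.
Qed.

Lemma main_sec :
  exists (U : Type) (u : I -> U),
    restricts (pushforward u A) B /\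
    forall (J : Type) (f : I -> J),
      restricts (pushforward f A) B ->
      exists g : U -> J,
        (forall i, f i = g (u i)) /\
        (forall g' : U -> J, (forall i, f i = g' (u i)) -> forall y, g' y = g y).
Proof.
pose U := {S : {set I} | [exists i, u0 i == S]}.
have uP : forall i, [exists i', u0 i' == u0 i] by move=> i; apply/existsP; exists i.
pose u' : I -> U := fun i => exist _ (u0 i) (uP i).
have u'E : forall i (y : U), (u' i = y) <-> (u0 i = proj1_sig y).
  move=> i [S hS] /=; split => [e|e]; first by move/(congr1 (@proj1_sig _ _)): e.
  subst S; congr exist; exact: bool_irrelevance.
pose r (y : U) : I := xchoose (elimT existsP (proj2_sig y)).
have rE : forall y, u' (r y) = y.
  by move=> y; apply/u'E; apply/eqP; exact: (xchooseP (elimT existsP (proj2_sig y))).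
have rval : forall y, u0 (r y) = proj1_sig y by move=> y; apply/u'E; exact: rE.
exists U, u'; split.
  apply: R2 => y.
  have -> : fib u' y = u0 (r y).
    apply/setP => i; rewrite inE -u0_eq; apply/decP/eqP => [e|e].
      by rewrite rval; apply/u'E.
    by apply/u'E; exact: etrans e (rval y).
  exact: good_u0.
move=> J f hf.
have gR := R1 hf.
have key : forall i i', u0 i = u0 i' -> f i = f i'.
  move=> i i' e.
  have hi' : i' \in fib f (f i') by rewrite inE; exact/decP.
  have : i \in fib f (f i').
    apply: (subsetP (min_u0 (gR (f i')) hi')); by rewrite -e in_u0.
  by rewrite inE => /decP.
exists (fun y => f (r y)); split.
  by move=> i; apply: key; rewrite rval.
move=> g' hg' y; by rewrite -[in LHS](rE y) -hg'.
Qed.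

End Main.

Theorem mainTheorem9 (k : pzRingType) (M : lmodType k) (B : M -> Prop)
    (I : finType) (A : I -> M -> Prop) :
  is_submod B ->
  is_decomposition (fun _ : M => True) A ->
  exists (U : Type) (u : I -> U),
    restricts (pushforward u A) B /\
    forall (J : Type) (f : I -> J),
      restricts (pushforward f A) B ->
      exists g : U -> J,
        (forall i, f i = g (u i)) /\
        (forall g' : U -> J, (forall i, f i = g' (u i)) -> forall y, g' y = g y).
Proof. move=> hB hA; exact: main_sec hB hA. Qed.
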